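(* Let $D$, $\Omega<0$, $\mu$ and $\varphi$ be as in the context. Then there exists $\lambda^\star>0$ such that for every $\lambda\ge\lambda^\star$, $\varphi_\lambda(x)>0$ for all $x\in H_\lambda$. Moreover, for every $\lambda_0>0$ there exists $R(\lambda_0)>0$ such that for every $\lambda\ge\lambda_0$ and every $x\in H_\lambda$ with $|x|\ge R(\lambda_0)$ one has $\varphi_\lambda(x)>0$.
   Context: Setting: $D\subset\mathbb{R}^2$ is a bounded simply connected domain with $C^1$ boundary and barycenter at the origin, belonging to the class $\Sigma_{\arccos\frac1{\sqrt5}}$ (for $x_0\in\partial D$ with outward unit normal $\vec\nu(x_0)$: (1) $x_0\cdot\vec\nu(x_0)\ge0$; (2) no point $x\in D$ satisfies $\frac{x-x_0}{|x-x_0|}\cdot\vec\nu(x_0)\ge\frac1{\sqrt5}$; (3) the reflection across the tangent line at $x_0$ of $\{x\in D:(x-x_0)\cdot\vec\nu(x_0)\ge0\}$ is contained in $D$). $\chi_D$ is a V-state with angular velocity $\Omega<0$: $\psi(x)-\frac12\Omega|x|^2=\mu$ on $\partial D$, where $\psi(x)=\frac1{2\pi}\int_D\log|x-y|\,dy$. Set $\varphi(x)=\mu+\frac12\Omega|x|^2-\psi(x)$; it satisfies $\varphi(x)=\mu+\frac12\Omega|x|^2-\frac1{2\pi}\int_{\mathbb{R}^2}\log|x-y|\,H(\varphi(y))\,dy$ for all $x$, with $H=\chi_{[0,\infty)}$. Notation: for $\lambda>0$, $H_\lambda=\{(x_1,x_2)\in\mathbb{R}^2:x_1<\lambda\}$,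 $T_\lambda=\{(\lambda,x_2):x_2\in\mathbb{R}\}$, $x_\lambda=(2\lambda-x_1,x_2)$ for $x=(x_1,x_2)$, and $\varphi_\lambda(x)=\varphi(x)-\varphi(x_\lambda)$. *)

(* Defs.v *)
From HB Require Import structures.
From mathcomp Require Import all_boot all_order all_algebra.
From mathcomp Require Import all_classical all_reals all_analysis.
Set Implicit Arguments. Unset Strict Implicit. Unset Printing Implicit Defensive.
Import Order.TTheory GRing.Theory Num.Theory.
Import numFieldNormedType.Exports.
Local Open Scope classical_set_scope.
Local Open Scope ring_scope.

Section Plane.
Variable R : realType.
Notation P := (R * R)%type.

(* Euclidean structure of R^2 (the library norm on pairs is the max norm). *)
Definition padd (x y : P) : P := (x.1 + y.1, x.2 + y.2).
Definition psub (x y : P) : P := (x.1 - y.1, x.2 - y.2).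
Definition pscale (a : R) (x : P) : P := (a * x.1, a * x.2).
Definition dot (x y : P) : R := x.1 * y.1 + x.2 * y.2.
Definition enorm (x : P) : R := Num.sqrt (dot x x).
Definition rot90 (x : P) : P := (- x.2, x.1).

Definition leb2 := ((@lebesgue_measure R) \x (@lebesgue_measure R))%E.

Definition bdry (D : set P) : set P := closure D `\` interior D.

Definition bounded_set (D : set P) : Prop :=
  exists M : R, forall x, D x -> enorm x <= M.

Definition simply_connected (D : set P) : Prop :=
  forall gamma : R -> P,
    {within `[0, 1]%classic, continuous gamma} ->
    (forall t, 0 <= t <= 1 -> D (gamma t)) ->
    gamma 0 = gamma 1 ->
    exists H : P -> P,
      {within (`[0, 1] `*` `[0, 1])%classic, continuous H} /\
      (forall s t, 0 <= s <= 1 -> 0 <= t <= 1 -> D (H (s, t))) /\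
      (forall t, 0 <= t <= 1 -> H (0, t) = gamma t) /\
      (forall t, 0 <= t <= 1 -> H (1, t) = gamma 0) /\
      (forall s, 0 <= s <= 1 -> H (s, 0) = H (s, 1)).

(* nu is the outward unit normal of D at x0, D being locally (near x0) the
   region below the graph of a C^1 function over the tangent line. *)
Definition outward_normal (D : set P) (x0 nu : P) : Prop :=
  enorm nu = 1 /\
  exists (r : R) (g : R -> R),
    0 < r /\ g 0 = 0 /\ (forall t, derivable g t 1) /\
    continuous (derive1 g) /\ derive1 g 0 = 0 /\
    forall t s, `|t| < r -> `|s| < r ->
      (D (padd x0 (padd (pscale t (rot90 nu)) (pscale s nu))) <-> s < g t).

Definition C1_domain (D : set P) : Prop :=
  open D /\ connected D /\ (exists x, D x) /\ bounded_set D /\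
  simply_connected D /\
  forall x0, bdry D x0 -> exists nu, outward_normal D x0 nu.

Definition barycenter_origin (D : set P) : Prop :=
  (\int[leb2]_(y in D) (y.1)%:E = 0)%E /\ (\int[leb2]_(y in D) (y.2)%:E = 0)%E.

Definition reflect_line (x0 nu x : P) : P :=
  psub x (pscale (2 * dot (psub x x0) nu) nu).

Definition in_Sigma (D : set P) : Prop :=
  forall x0 nu, bdry D x0 -> outward_normal D x0 nu ->
    [/\ 0 <= dot x0 nu,
        ~ (exists x, D x /\
             (Num.sqrt 5)^-1 <= (enorm (psub x x0))^-1 * dot (psub x x0) nu)
      & forall x, D x -> 0 <= dot (psub x x0) nu -> D (reflect_line x0 nu x)].

Definition psi (D : set P) (x : P) : R :=
  (2 * pi)^-1 * fine (\int[leb2]_(y in D) (ln (enorm (psub x y)))%:E)%E.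

Definition Vstate (D : set P) (Omega mu : R) : Prop :=
  forall x, bdry D x -> psi D x - 2^-1 * Omega * enorm x ^+ 2 = mu.

Definition phi (D : set P) (Omega mu : R) (x : P) : R :=
  mu + 2^-1 * Omega * enorm x ^+ 2 - psi D x.

Definition heav (t : R) : R := if 0 <= t then 1 else 0.

Definition reflT (lam : R) (x : P) : P := (2 * lam - x.1, x.2).

Definition phi_lam (D : set P) (Omega mu lam : R) (x : P) : R :=
  phi D Omega mu x - phi D Omega mu (reflT lam x).

End Plane.

(* Main.v *)
Require Import Defs.
From HB Require Import structures.
From mathcomp Require Import all_boot all_order all_algebra.
From mathcomp Require Import all_classical all_reals all_analysis.
Import Order.TTheory GRing.Theory Num.Theory.
Local Open Scope classical_set_scope.
Local Open Scope ring_scope.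

From mathcomp Require Import measurable_realfun ring lra.
Import numFieldNormedType.Exports.
Set Implicit Arguments. Unset Strict Implicit.
Section S.
Variable R : realType.
Lemma enorm_ge0 (z : R * R) : 0 <= enorm z.
Proof. exact: sqrtr_ge0. Qed.
Lemma enorm_sq (z : R * R) : enorm z ^+ 2 = z.1 ^+ 2 + z.2 ^+ 2.
Proof. by rewrite /enorm /dot sqr_sqrtr -?expr2 // addr_ge0 // sqr_ge0. Qed.
Lemma enorm_le (z w : R * R) : z.1 ^+ 2 + z.2 ^+ 2 <= w.1 ^+ 2 + w.2 ^+ 2 -> enorm z <= enorm w.
Proof. by rewrite /enorm /dot -!expr2 => h; apply: ler_wsqrtr. Qed.
Lemma enorm_abs1 (z : R * R) : `|z.1| <= enorm z.
Proof. rewrite -sqrtr_sqr /enorm /dot -!expr2; apply: ler_wsqrtr; rewrite lerDl sqr_ge0 //. Qed.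
Lemma cs (d y : R * R) : d.1 * y.1 + d.2 * y.2 <= enorm d * enorm y.
Proof.
have h0 : 0 <= enorm d * enorm y by rewrite mulr_ge0 // enorm_ge0.
have h1 : (enorm d * enorm y) ^+ 2 = (d.1 ^+ 2 + d.2 ^+ 2) * (y.1 ^+ 2 + y.2 ^+ 2) by rewrite exprMn !enorm_sq.
have h2 : (d.1 * y.1 + d.2 * y.2) ^+ 2 <= (enorm d * enorm y) ^+ 2.
  rewrite h1 -subr_ge0; have -> : (d.1 ^+ 2 + d.2 ^+ 2) * (y.1 ^+ 2 + y.2 ^+ 2) - (d.1 * y.1 + d.2 * y.2) ^+ 2 = (d.1 * y.2 - d.2 * y.1) ^+ 2 by ring.
  exact: sqr_ge0.
nra.
Qed.
Lemma tri (x y : R * R) : enorm x - enorm y <= enorm (psub x y).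
Proof.
have := cs (psub x y) y; have := enorm_sq x; have := enorm_sq y; have := enorm_sq (psub x y).
have := enorm_ge0 x; have := enorm_ge0 y; have := enorm_ge0 (psub x y).
rewrite /psub /=; nra.
Qed.
Lemma ln_mono (a b : R) : 0 <= a -> a <= b -> 1 <= b -> ln a <= ln b.
Proof.
move=> a0 ab b1; have [->|an0] := eqVneq a 0.
  by rewrite ln0 // ln_ge0.
have ap : 0 < a by rewrite lt_neqAle eq_sym an0 a0.
by rewrite ler_ln // posrE; lra.
Qed.
Lemma ln_le_sub1 (b : R) : 0 < b -> ln b <= b - 1.
Proof.
move=> b0; have := @le_ln1Dx R (b - 1); rewrite addrCA subrr addr0; apply; lra.
Qed.
Lemma ln_le_add (a b k : R) : 0 < a -> 0 < b -> a <= b + k * b -> ln a <= ln b + k.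
Proof.
move=> a0 b0 h.
have e : ln a = ln (a / b) + ln b.
  by rewrite ln_div ?posrE // subrK.
rewrite e (addrC (ln (a / b))) lerD2l.
have h1 := ln_le_sub1 (divr_gt0 a0 b0).
have h2 : a / b - 1 <= k by rewrite lerBlDr ler_pdivrMr //; lra.
lra.
Qed.
Lemma mfun_lnd (x : R * R) : measurable_fun [set: R * R] (fun y : R * R => ln (enorm (psub x y))).
Proof.
rewrite /enorm /psub /dot /=.
apply: (measurableT_comp (@measurable_ln R)).
apply: (measurableT_comp (continuous_measurable_fun (@sqrt_continuous R))).
apply: measurable_funD; apply: measurable_funM;
  apply: measurable_funB; try exact: measurable_cst;
  [exact: measurable_fst|exact: measurable_fst|exact: measurable_snd|exact: measurable_snd].
Qed.
Lemma open_ball2 (D : set (R*R)) (x : R * R) : open D -> D x ->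
  exists e : R, 0 < e /\ forall y : R * R, `|x.1 - y.1| < e -> `|x.2 - y.2| < e -> D y.
Proof.
move=> oD Dx.
have : nbhs x D by apply: open_nbhs_nbhs; split.
move=> /nbhs_ballP[e e0 H]; exists e; split => // y h1 h2; apply: H.
by split.
Qed.

Definition cc (n : nat) : R := (n.+1%:R)^-1.
Definition box (n : nat) (i j : int) : set (R*R) :=
  [set` `[i%:~R * cc n, (i+1)%:~R * cc n[ ] `*` [set` `[j%:~R * cc n, (j+1)%:~R * cc n[ ].

Lemma box_meas n i j : measurable (box n i j).
Proof. by apply: measurableX; exact: measurable_itv. Qed.

Lemma cc_gt0 n : 0 < cc n.
Proof. by rewrite /cc invr_gt0 ltr0n. Qed.

Lemma floor_box (n : nat) (t : R) :
  (Num.floor (t * n.+1%:R))%:~R * cc n <= t < (Num.floor (t * n.+1%:R)+1)%:~R * cc n.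
Proof.
set i := Num.floor _; have c0 := cc_gt0 n.
have h1 := floor_le (t * n.+1%:R); have h2 := floorD1_gt (t * n.+1%:R).
rewrite -/i in h1 h2.
have hc : n.+1%:R * cc n = 1 by rewrite /cc mulfV // pnatr_eq0.
apply/andP; split.
- have := ler_wpM2r (ltW c0) h1. by rewrite -mulrA hc mulr1.
- by move: h2; rewrite -(ltr_pM2r c0) -mulrA hc mulr1.
Qed.

Lemma in_box_close n (i : int) (s t : R) : i%:~R * cc n <= s < (i+1)%:~R * cc n ->
  i%:~R * cc n <= t < (i+1)%:~R * cc n -> `|s - t| < cc n.
Proof.
rewrite intrD mulrDl mul1r => /andP[a b] /andP[c d].
rewrite ltr_norml; apply/andP; split; lra.
Qed.

Lemma open_meas (D : set (R*R)) : open D -> measurable D.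
Proof.
move=> oD.
pose F k := match (unpickle k : option (nat * int * int)) with
  | Some (n, i, j) => if `[< box n i j `<=` D >] then box n i j else set0
  | None => set0 end.
have -> : D = \bigcup_(k in setT) F k.
  apply/seteqP; split.
  - move=> x Dx; have [e [e0 He]] := open_ball2 oD Dx.
    pose n := Num.trunc (e^-1).
    exists (pickle (n, Num.floor (x.1 * n.+1%:R), Num.floor (x.2 * n.+1%:R))) => //.
    have ce : cc n < e.
      rewrite /cc -[X in _ < X]invrK ltf_pV2 ?posrE ?invr_gt0 ?ltr0n //.
      exact: truncnS_gt.
    have hb : box n (Num.floor (x.1 * n.+1%:R)) (Num.floor (x.2 * n.+1%:R)) `<=` D.
      move=> y [/= h1 h2]; apply: He.
      + apply: lt_trans ce; apply: in_box_close (floor_box n x.1) _.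
        by move: h1; rewrite in_itv.
      + apply: lt_trans ce; apply: in_box_close (floor_box n x.2) _.
        by move: h2; rewrite in_itv.
    rewrite /F pickleK asboolT //; split => /=; rewrite in_itv; exact: floor_box.
  - move=> x [k _]; rewrite /F; case: unpickle => [[[n i] j]|] //.
    by case: asboolP => // h; exact: h.
apply: bigcup_measurable => k _; rewrite /F; case: unpickle => [[[n i] j]|].
  by case: asboolP => _; [exact: box_meas|exact: measurable0].
exact: measurable0.
Qed.

End S.
Section I.
Variable R : realType.
Variable D : set (R * R).
Hypothesis mD : measurable D.
Variable M0 : R.
Hypothesis hM : forall y, D y -> enorm y <= M0.
Variable L : R.
Hypothesis hL : @leb2 R D = L%:E.
Hypothesis L0 : 0 <= L.

Definition I (u : R * R) := (\int[@leb2 R]_(y in D) (ln (enorm (psub u y)))%:E)%E.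

Lemma mI u : measurable_fun D (fun y : R * R => (ln (enorm (psub u y)))%:E).
Proof. by apply/measurable_EFinP; apply: measurable_funTS; exact: mfun_lnd. Qed.

Lemma I_fin u : (forall y, D y -> 1 <= enorm (psub u y)) -> exists r, I u = r%:E /\ 0 <= r.
Proof.
move=> h1.
pose C := 2 * (u.1 ^+ 2 + u.2 ^+ 2) + 2 * M0 ^+ 2.
have ge0 : (0 <= I u)%E.
  by apply: integral_ge0 => y Dy; rewrite lee_fin ln_ge0 // h1.
have le : (I u <= (C * L)%:E)%E.
  apply: (@le_trans _ _ (\int[@leb2 R]_(y in D) (cst C%:E y))%E).
    apply: ge0_le_integral => //.
    - by move=> y Dy; rewrite lee_fin ln_ge0 // h1.
    - exact: mI.
    -     move=> y Dy; rewrite lee_fin /=.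
    have b1 := h1 _ Dy; have hb := ln_le_sub1 (lt_le_trans ltr01 b1).
    have := enorm_sq (psub u y); have := enorm_sq y; have := hM Dy; have := enorm_ge0 y.
    move=> e0 eM ey eb.
    have q1 : enorm y ^+ 2 <= M0 ^+ 2 by rewrite ler_pXn2r // ?nnegrE //; lra.
    have q2 : enorm (psub u y) - 1 <= enorm (psub u y) ^+ 2 by nra.
    have q3 : enorm (psub u y) ^+ 2 <= 2 * (u.1 ^+ 2 + u.2 ^+ 2) + 2 * enorm y ^+ 2.
      rewrite eb ey /psub /= -subr_ge0.
      have -> : 2 * (u.1 ^+ 2 + u.2 ^+ 2) + 2 * (y.1 ^+ 2 + y.2 ^+ 2) - ((u.1 - y.1) ^+ 2 + (u.2 - y.2) ^+ 2) = (u.1 + y.1) ^+ 2 + (u.2 + y.2) ^+ 2 by ring.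
      by rewrite addr_ge0 // sqr_ge0.
    rewrite /C; lra.
  have hC : (C%:E * @leb2 R D = (C * L)%:E)%E by rewrite hL.
  rewrite integral_cst //; move/eqP: hC; rewrite eq_le => /andP[hh _]; exact: hh.
move: ge0 le; case: (I u) => [r| |] //= r0 _; exists r; split => //.
Qed.

Lemma I_le u v : (forall y, D y -> 1 <= enorm (psub v y)) ->
  (forall y, D y -> enorm (psub u y) <= enorm (psub v y)) -> fine (I u) <= fine (I v).
Proof.
move=> h1 h2; have [r [hr r0]] := I_fin h1.
have le : (I u <= I v)%E.
  rewrite /I integralE.
  apply: (@le_trans _ _ (\int[@leb2 R]_(y in D) ((fun y => (ln (enorm (psub u y)))%:E)^\+ y))%E).
    by apply: geeDl; rewrite oppe_le0; apply: integral_ge0 => y _; exact: funeneg_ge0.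
  apply: ge0_le_integral => //.
  - by apply: measurable_funepos; exact: mI.
  - exact: mI.
  move=> y Dy; rewrite funeposE ge_max !lee_fin ln_ge0 ?h1 // andbT.
  apply: ln_mono; [exact: enorm_ge0|exact: h2|exact: h1].
move: le; rewrite hr; case: (I u) => [s| |] //=; rewrite ?lee_fin //.
Qed.

Lemma I_diff u v k : 0 <= k -> (forall y, D y -> 1 <= enorm (psub u y)) ->
  (forall y, D y -> 1 <= enorm (psub v y)) ->
  (forall y, D y -> ln (enorm (psub u y)) <= ln (enorm (psub v y)) + k) ->
  fine (I u) <= fine (I v) + k * L.
Proof.
move=> k0 hu hv h.
have [r [hr r0]] := I_fin hv; have [s [hs s0]] := I_fin hu.
have le : (I u <= I v + (k * L)%:E)%E.
  apply: (@le_trans _ _ (\int[@leb2 R]_(y in D) ((ln (enorm (psub v y)))%:E + (cst k%:E) y))%E).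
    apply: ge0_le_integral => //.
    - by move=> y Dy; rewrite lee_fin ln_ge0 // hu.
    - exact: mI.
    - apply/measurable_EFinP; apply: measurable_funD; last exact: measurable_cst.
      by apply: measurable_funTS; exact: mfun_lnd.
  rewrite ge0_integralD //.
  - have hC : (I v + k%:E * @leb2 R D = I v + (k * L)%:E)%E by rewrite hL.
    rewrite integral_cst //; move/eqP: hC; rewrite eq_le => /andP[hh _]; exact: hh.
  - by move=> y Dy; rewrite lee_fin ln_ge0 // hv.
  - exact: mI.
move: le; rewrite hr hs /= -EFinD lee_fin //.
Qed.
End I.

Lemma leb2_fin (R : realType) (D : set (R * R)) (M0 : R) : measurable D -> 0 < M0 ->
  (forall y, D y -> enorm y <= M0) -> exists L, @leb2 R D = L%:E /\ 0 <= L.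
Proof.
move=> mD M0p hM.
pose S : set (R * R) := [set` `[- M0, M0]%R] `*` [set` `[- M0, M0]%R].
have mS : measurable S by apply: measurableX; exact: measurable_itv.
have hS : @leb2 R S = ((M0 + M0) * (M0 + M0))%:E.
  rewrite /leb2 product_measure1E; try exact: measurable_itv.
  have h : (@lebesgue_measure R `[- M0, M0]%classic = (M0 + M0)%:E).
    by rewrite lebesgue_measure_itv /= lte_fin ifT ?opprK //; lra.
  transitivity ((M0 + M0)%:E * (M0 + M0)%:E)%E; last by rewrite -EFinM.
  by congr (_ * _)%E; exact: h.
have DS : D `<=` S.
  move=> y Dy; have := enorm_abs1 y; have := hM _ Dy.
  have : `|y.2| <= enorm y.
    rewrite -sqrtr_sqr /enorm /dot -!expr2; apply: ler_wsqrtr; rewrite lerDr sqr_ge0 //.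
  move=> h2 h3 h1; split => /=; rewrite in_itv /= -ler_norml; lra.
have le : (@leb2 R D <= ((M0 + M0) * (M0 + M0))%:E)%E.
  rewrite -hS; apply: le_measure => //; rewrite inE //.
have ge : (0 <= @leb2 R D)%E by exact: measure_ge0.
move: le ge; case: (@leb2 R D) => [r| |] //= _ r0; exists r; split => //.
Qed.

Lemma phi_lam_eq (R : realType) (D : set (R * R)) (Omega mu lam : R) (x : R * R) :
  phi_lam D Omega mu lam x = 2 * Omega * lam * (x.1 - lam) +
    (2 * pi)^-1 * (fine (I D (reflT lam x)) - fine (I D x)).
Proof.
rewrite /phi_lam /phi /psi -/(I D x) -/(I D (reflT lam x)) !enorm_sq /reflT /=.
have p0 : (pi : R) != 0 by rewrite gt_eqF // pi_gt0.
move: p0; generalize (pi : R) => p p0.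
by field.
Qed.

Unset Implicit Arguments. Set Strict Implicit.

Theorem proposition3 (R : realType) (D : set (R * R)) (Omega mu : R) :
  C1_domain D -> barycenter_origin D -> in_Sigma D ->
  Omega < 0 -> Vstate D Omega mu ->
  (forall x, phi D Omega mu x =
     mu + 2^-1 * Omega * enorm x ^+ 2
     - (2 * pi)^-1 * fine (\int[@leb2 R]_(y in [set: R * R])
                             (ln (enorm (psub x y)) * heav (phi D Omega mu y))%:E)%E) ->
  (exists lamstar : R, 0 < lamstar /\
     forall lam, lamstar <= lam ->
       forall x : R * R, x.1 < lam -> 0 < phi_lam D Omega mu lam x) /\
  (forall lam0 : R, 0 < lam0 ->
     exists R0 : R, 0 < R0 /\
       forall lam, lam0 <= lam ->
         forall x : R * R, x.1 < lam -> R0 <= enorm x -> 0 < phi_lam D Omega mu lam x).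
Proof.
move=> [oD [_ [_ [[M hM] _]]]] _ _ hO _ _.
pose M0 := `|M| + 1.
have M0p : 0 < M0 by rewrite /M0; have := normr_ge0 M; lra.
have hM0 : forall y, D y -> enorm y <= M0.
  by move=> y Dy; have := hM y Dy; have := ler_norm M; rewrite /M0; lra.
have hy1 : forall y, D y -> y.1 <= M0.
  move=> y Dy; have := hM0 y Dy; have := enorm_abs1 y; have := ler_norm y.1; lra.
have mD := open_meas oD.
have [L [hL L0]] := leb2_fin mD M0p hM0.
have pi0 : 0 < (pi : R) := pi_gt0 R.
split.
  exists (M0 + 1); split; first lra.
  move=> lam hlam x hx; rewrite phi_lam_eq.
  have t1 : 0 < 2 * Omega * lam * (x.1 - lam).
    have l0 : 0 < lam by lra.
    have l1 : 0 < lam - x.1 by lra.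
    have := mulr_gt0 l0 l1; nra.
  suff t2 : 0 <= (2 * pi)^-1 * (fine (I D (reflT lam x)) - fine (I D x)) by lra.
  apply: mulr_ge0; first by rewrite invr_ge0; lra.
  rewrite subr_ge0; apply: (I_le mD hM0 hL).
    move=> y Dy; have := enorm_abs1 (psub (reflT lam x) y); have := hy1 y Dy.
    have := ler_norm (psub (reflT lam x) y).1; rewrite /psub /reflT /=; lra.
  move=> y Dy; apply: enorm_le; rewrite /psub /reflT /=.
  have := hy1 y Dy => hy.
  have l1 : 0 <= lam - x.1 by lra.
  have l2 : 0 <= lam - y.1 by lra.
  have := mulr_ge0 l1 l2; nra.
move=> lam0 hl0.
pose W := pi * (- Omega) * lam0.
have W0 : 0 < W by rewrite /W !mulr_gt0 //; lra.
pose Q := M0 * L / W.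
have Q0 : 0 <= Q by rewrite /Q divr_ge0 ?mulr_ge0 //; lra.
have QW : Q * W = M0 * L by rewrite /Q mulrAC -mulrA mulfV ?mulr1 // gt_eqF.
pose r := Q + 1.
have r1 : 1 <= r by rewrite /r; lra.
exists (M0 + r); split; first lra.
move=> lam hlam x hx hR.
have l0 : 0 < lam by lra.
pose t := lam - x.1.
have t0 : 0 < t by rewrite /t; lra.
have hxl : enorm x <= enorm (reflT lam x).
  apply: enorm_le; rewrite /reflT /=.
  have := mulr_gt0 l0 t0; rewrite /t; nra.
have ha : forall y, D y -> r <= enorm (psub x y).
  move=> y Dy; have := tri x y; have := hM0 y Dy; lra.
have hb : forall y, D y -> r <= enorm (psub (reflT lam x) y).
  move=> y Dy; have := tri (reflT lam x) y; have := hM0 y Dy; lra.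
pose k := 4 * M0 * t / r ^+ 2.
have r0 : 0 < r by lra.
have k0 : 0 <= k by rewrite /k divr_ge0 ?mulr_ge0 ?sqr_ge0 //; lra.
have kr : k * r ^+ 2 = 4 * M0 * t.
  by rewrite /k mulfVK // expf_neq0 // gt_eqF.
have hI := I_diff mD hM0 hL k0 (fun y Dy => le_trans r1 (ha y Dy))
  (fun y Dy => le_trans r1 (hb y Dy)) _.
have hI' : fine (I D x) <= fine (I D (reflT lam x)) + k * L.
  apply: hI => y Dy.
  have ar := ha y Dy; have br := hb y Dy.
  set a := enorm (psub x y) in ar *; set b := enorm (psub (reflT lam x) y) in br *.
  have hab : a ^+ 2 - b ^+ 2 <= k * r ^+ 2.
    rewrite kr /a /b !enorm_sq /psub /reflT /=.
    have := hy1 y Dy => hy.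
    have e : (x.1 - y.1) ^+ 2 + (x.2 - y.2) ^+ 2 - ((2 * lam - x.1 - y.1) ^+ 2 + (x.2 - y.2) ^+ 2)
      = 4 * t * (y.1 - lam) by rewrite /t; ring.
    rewrite e.
    have h1 : y.1 - lam <= M0 by lra.
    have t4 : 0 <= 4 * t by lra.
    have := ler_wpM2l t4 h1; lra.
  have hrb : r ^+ 2 <= b * (a + b).
    rewrite expr2; apply: ler_pM; lra.
  have h2 : (a - b) * (a + b) <= (k * b) * (a + b).
    have : k * r ^+ 2 <= k * (b * (a + b)) by apply: ler_wpM2l.
    have -> : (a - b) * (a + b) = a ^+ 2 - b ^+ 2 by ring.
    rewrite mulrA; lra.
  have apb : 0 < a + b by lra.
  move: h2; rewrite ler_pM2r // => h2.
  apply: ln_le_add; [exact: lt_le_trans r0 ar|exact: lt_le_trans r0 br|].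
  by rewrite -lerBlDl.
rewrite phi_lam_eq.
have key : (2 * pi)^-1 * (k * L) < 2 * (- Omega) * lam * t.
  have e : 2 * (- Omega) * lam * t - (2 * pi)^-1 * (k * L)
     = 2 * t * (pi * (- Omega) * lam * r ^+ 2 - M0 * L) / (pi * r ^+ 2).
    rewrite /k; move: pi0; generalize (pi : R) => p p0.
    field; apply/andP; split; rewrite gt_eqF //; lra.
  rewrite -subr_gt0 e; apply: divr_gt0; last by rewrite mulr_gt0 // exprn_gt0.
  apply: mulr_gt0; first lra.
  rewrite subr_gt0 -QW.
  have h3 : Q < r ^+ 2 by rewrite /r; nra.
  have h4 : W * r ^+ 2 <= pi * (- Omega) * lam * r ^+ 2.
    rewrite ler_wpM2r ?sqr_ge0 // /W ler_wpM2l //; rewrite mulr_ge0 //; lra.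
  have h5 : Q * W < r ^+ 2 * W by rewrite ltr_pM2r.
  lra.
have h6 : - ((2 * pi)^-1 * (k * L)) <= (2 * pi)^-1 * (fine (I D (reflT lam x)) - fine (I D x)).
  rewrite -mulrN; apply: ler_wpM2l; first by rewrite invr_ge0; lra.
  lra.
rewrite /t in key; lra.
Qed.
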